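(* For every $k$-terminal digraph $G$ and every pair-set $P\subseteq K\times K$, there exists a reachability-preserving minor $H$ of $G$ with respect to $P$ having $O(k\cdot|P|)$ non-terminal vertices.
   Context: A $k$-terminal digraph is a digraph $G=(V,E)$ with terminal set $K\subset V$, $|K|=k$. A minor of a digraph is obtained by vertex deletions, edge deletions and edge contractions (contracting $(u,v)$ identifies $u$ and $v$, discarding loops), never deleting terminals nor identifying two terminals. For a pair-set $P\subseteq K\times K$, a reachability-preserving minor of $G$ with respect to $P$ is a minor $H$ of $G$ with $K\subseteq V(H)$ such that for every $(s,t)\in P$, $t$ is reachable from $s$ in $H$ iff $t$ is reachable from $s$ in $G$. *)

(* Defs.v *)
From mathcomp Require Import all_boot.
Set Implicit Arguments. Unset Strict Implicit. Unset Printing Implicit Defensive.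

Section Digraph.
Variable T : finType.

(* A digraph is a pair (V, E) with V : {set T}; only edges between vertices
   of V count: the actual adjacency relation is [adj V E]. *)
Definition adj (V : {set T}) (E : rel T) : rel T :=
  fun a b => [&& a \in V, b \in V & E a b].

Definition reach (V : {set T}) (E : rel T) (s t : T) : bool :=
  connect (adj V E) s t.

Inductive minor_step (K : {set T}) :
    {set T} -> rel T -> {set T} -> rel T -> Prop :=
  | del_vertex (V : {set T}) (E : rel T) v : v \in V -> v \notin K ->
      minor_step K V E (V :\ v) E
  | del_edge (V : {set T}) (E : rel T) x y : adj V E x y ->
      minor_step K V E V (fun a b => E a b && ((a, b) != (x, y)))
  (* contract an edge between w and z (in either direction), identifying
     them into the vertex w; z must not be a terminal (so terminals are
     never deleted nor identified with each other); loops are discarded. *)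
  | contract_edge (V : {set T}) (E : rel T) w z : (adj V E w z || adj V E z w) -> w != z ->
      z \notin K ->
      minor_step K V E (V :\ z)
        (fun a b => (a != b) &&
           [|| E a b, (a == w) && E z b | (b == w) && E a z]).

Inductive minor (K : {set T}) : {set T} -> rel T -> {set T} -> rel T -> Prop :=
  | minor_refl (V : {set T}) (E : rel T) : minor K V E V E
  | minor_trans (V : {set T}) (E : rel T) (V1 : {set T}) (E1 : rel T) (V2 : {set T}) (E2 : rel T) :
      minor_step K V E V1 E1 -> minor K V1 E1 V2 E2 -> minor K V E V2 E2.

Definition rp_minor (K : {set T}) (P : {set T * T})
    (V : {set T}) (E : rel T) (VH : {set T}) (EH : rel T) : Prop :=
  [/\ minor K V E VH EH, K \subset VH &
      forall s t, (s, t) \in P -> reach VH EH s t = reach V E s t].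

End Digraph.

(* Main.v *)
Require Import Defs.
From mathcomp Require Import all_boot.
From Stdlib Require Import Classical.
From mathcomp Require Import zify.
Set Implicit Arguments. Unset Strict Implicit. Unset Printing Implicit Defensive.

Section Gen.
Variable T : finType.

Lemma connect_inv (e : rel T) (Pr : T -> Prop) x y :
  Pr x -> (forall u w, Pr u -> e u w -> Pr w) -> connect e x y -> Pr y.
Proof.
move=> Px step /connectP [p pth ->].
elim: p x Px pth => [|z p IH] x Px //= /andP[exz pth].
exact: IH (step _ _ Px exz) pth.
Qed.

Lemma connect_mono (e e' : rel T) x y :
  (forall u w, e u w -> e' u w) -> connect e x y -> connect e' x y.
Proof.
move=> H; apply: (connect_inv (Pr := fun c => connect e' x c)) => // u w Hu /H Hw.
exact: connect_trans Hu (connect1 Hw).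
Qed.

Section Cut.
Variables (e e' : rel T) (p q : T).
Hypothesis He' : forall x y, e' x y = e x y && ((x, y) != (p, q)).

Lemma cut1 s t : connect e s t -> ~~ connect e' s t -> connect e' s p.
Proof.
move=> Hc nc.
have : connect e' s t \/ connect e' s p.
  apply: (connect_inv (Pr := fun c => connect e' s c \/ connect e' s p)) Hc.
    by left.
  move=> u w [Hu|Hp] Huw; last by right.
  case: (eqVneq (u, w) (p, q)) => [Eq|ne]; first by case: Eq => E1 _; right; rewrite -E1.
  left; apply: connect_trans Hu (connect1 _); by rewrite He' Huw ne.
by case=> // H; rewrite H in nc.
Qed.

Lemma cut2 s t : connect e s t -> ~~ connect e' s t -> connect e' q t.
Proof.
move=> /connectP [pp pth ->].
elim: pp s pth => [|z pp IH] c /=.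
  by move=> _; rewrite connect0.
move=> /andP[ecz pth] nc.
case: (boolP (connect e' z (last z pp))) => h; last exact: IH.
case: (eqVneq (c, z) (p, q)) => [Eq|ne]; first by case: Eq => _ <-.
have : connect e' c (last z pp).
  apply: connect_trans h; apply: connect1; by rewrite He' ecz ne.
by rewrite (negbTE nc).
Qed.
End Cut.

End Gen.
Section Contr.
Variables (T : finType) (V : {set T}) (E : rel T) (w z : T).
Definition Ec : rel T := fun a b => (a != b) &&
           [|| E a b, (a == w) && E z b | (b == w) && E a z].

Lemma contr_fwd x y : w \in V -> w != z -> x != z -> y != z ->
  reach V E x y -> reach (V :\ z) Ec x y.
Proof.
move=> wV wz xz yz Hr.
pose phi u := if u == z then w else u.
have phiV u : u \in V -> phi u \in V :\ z.
  by rewrite /phi; case: eqP => [_|/eqP uz] uV; rewrite in_setD1 ?wz ?uz.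
have step u u' : adj V E u u' -> connect (adj (V :\ z) Ec) (phi u) (phi u').
  case/and3P=> uV u'V Euu'.
  case: (eqVneq (phi u) (phi u')) => [->|ne]; first exact: connect0.
  apply: connect1; rewrite /adj phiV // phiV //=.
  rewrite /Ec ne /=.
  move: ne; rewrite /phi.
  case: (eqVneq u z) => [E1|uz]; case: (eqVneq u' z) => [E2|u'z] //=; subst.
  - by rewrite eqxx.
  - by rewrite eqxx Euu' orbT.
  - by rewrite eqxx Euu' !orbT.
  - by rewrite Euu'.
have : connect (adj (V :\ z) Ec) x (phi y).
  apply: (connect_inv (Pr := fun c => connect (adj (V :\ z) Ec) x (phi c))) Hr.
    by rewrite /phi (negbTE xz).
  move=> u u' Hu /step Hs; exact: connect_trans Hu Hs.
by rewrite /phi (negbTE yz).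
Qed.

Lemma contr_bwd x y : adj V E w z -> reach (V :\ z) Ec x y ->
  reach V E x y \/ (reach V E x z /\ reach V E w y).
Proof.
move=> Hwz Hr.
have wV : w \in V by case/and3P: Hwz.
have zV : z \in V by case/and3P: Hwz.
apply: (connect_inv (Pr := fun c => reach V E x c \/ (reach V E x z /\ reach V E w c))) Hr.
  by left; exact: connect0.
move=> u u' Hu /and3P[].
rewrite !in_setD1 => /andP[uz uV] /andP[u'z u'V] /andP[_].
case/or3P => [Euu'|/andP[/eqP uw Ezu']|/andP[/eqP u'w Euz]].
- have H1 : adj V E u u' by rewrite /adj uV u'V Euu'.
  case: Hu => [Hxu|[Hxz Hwu]].
    by left; exact: connect_trans Hxu (connect1 H1).
  by right; split => //; exact: connect_trans Hwu (connect1 H1).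
- have H1 : adj V E z u' by rewrite /adj zV u'V Ezu'.
  subst u.
  case: Hu => [Hxw|[Hxz Hww]].
    left; apply: connect_trans Hxw _; apply: connect_trans (connect1 Hwz) (connect1 H1).
  by left; exact: connect_trans Hxz (connect1 H1).
- have H1 : adj V E u z by rewrite /adj zV uV Euz.
  subst u'.
  case: Hu => [Hxu|[Hxz Hwu]].
    by right; split; [exact: connect_trans Hxu (connect1 H1)|exact: connect0].
  by right; split => //; exact: connect0.
Qed.
End Contr.
Section Minimal.
Variables (T : finType) (V : {set T}) (E : rel T) (K : {set T}) (P : {set T * T}).
Hypothesis KV : K \subset V.
Hypothesis PK : P \subset setX K K.
Hypothesis Hmin : forall V1 E1, minor_step K V E V1 E1 ->
  exists s t, (s, t) \in P /\ reach V1 E1 s t != reach V E s t.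

Definition Edel (a v : T) : rel T := fun p q => E p q && ((p, q) != (a, v)).

Lemma adj_del a v x y : adj V (Edel a v) x y = adj V E x y && ((x, y) != (a, v)).
Proof. by rewrite /adj /Edel !andbA. Qed.

Lemma reach_del a v s t : reach V (Edel a v) s t -> reach V E s t.
Proof. apply: connect_mono => x y; rewrite adj_del; by case/andP. Qed.

Lemma reach_delv v s t : reach (V :\ v) E s t -> reach V E s t.
Proof. apply: connect_mono => x y; rewrite /adj !in_setD1.
by case/and3P=> /andP[_ ->] /andP[_ ->] ->. Qed.

Lemma connect_in (A : {set T}) (F : rel T) s u :
  connect (adj A F) s u -> u = s \/ u \in A.
Proof.
apply: (connect_inv (Pr := fun c => c = s \/ c \in A)); first by left.
by move=> x y _ /and3P[_ -> _]; right.
Qed.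

Lemma PK1 s t : (s, t) \in P -> s \in K /\ t \in K.
Proof. move=> /(subsetP PK); rewrite in_setX; by case/andP. Qed.

Definition Qp (v : T) (x : (T * T) * T) (a t : T) : bool :=
  (adj V E a v) && ((x.1 \in P) && ((x.2 \in K) && (((x.2, t) \in P) &&
  ((~~ reach V E x.2 t) && ((reach V E x.2 v) && ((reach V E a t) &&
  ((reach V E x.1.1 x.1.2) && ~~ reach V (Edel a v) x.1.1 x.1.2))))))).

Definition Qb (v : T) (x : (T * T) * T) : bool := [exists a, exists t, Qp v x a t].

Lemma exQ v : v \in V -> v \notin K -> exists x, Qb v x.
Proof.
move=> vV vK.
have [s [t0 [Pst Hd]]] := Hmin (del_vertex E vV vK).
have [sK _] := PK1 Pst.
have sV : s \in V by exact: (subsetP KV).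
have sv : s != v by apply/eqP => esv; rewrite -esv sK in vK.
have Hr : reach V E s t0.
  apply/negPn/negP => nr; move: Hd; rewrite (negbTE nr).
  by case: (boolP (reach (V :\ v) E s t0)) => // /reach_delv; rewrite (negbTE nr).
have nHr : ~~ reach (V :\ v) E s t0 by move: Hd; rewrite Hr; case: (reach _ _ _ _).
have [a [av nav]] : exists a, adj V E a v /\ a != v.
  have : reach (V :\ v) E s t0 \/ exists a, adj V E a v /\ a != v.
    apply: (connect_inv (Pr := fun c => reach (V :\ v) E s c \/ exists a, adj V E a v /\ a != v)) Hr.
      by left; exact: connect0.
    move=> u u' [Hu|Hex] Huu'; last by right.
    have uv : u != v /\ u \in V.
      case: (connect_in Hu) => [->|]; first by [].
      by rewrite in_setD1 => /andP[-> ->].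
    case: (eqVneq u' v) => [Eu'|u'v].
      by right; exists u; subst; split => //; case: uv.
    left; apply: connect_trans Hu (connect1 _).
    case/and3P: Huu' => uV u'V Euu'.
    by rewrite /adj !in_setD1 u'v u'V Euu' andbT; case: uv => -> ->.
  by case=> // H; rewrite H in nHr.
have [s1 [t1 [Pst1 Hd1]]] := Hmin (del_edge K av).
have Hr1 : reach V E s1 t1.
  apply/negPn/negP => nr; move: Hd1; rewrite (negbTE nr).
  by case: (boolP (reach V (Edel a v) s1 t1)) => // /reach_del; rewrite (negbTE nr).
have nHr1 : ~~ reach V (Edel a v) s1 t1.
  by move: Hd1; rewrite Hr1; rewrite /Edel; case: (reach _ _ _ _).
have avb : adj V E a v || adj V E v a by rewrite av.
have [sg [tau [Pst2 Hd2]]] := Hmin (contract_edge avb nav vK).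
have [sgK tauK] := PK1 Pst2.
have sgv : sg != v by apply/eqP => e; rewrite -e sgK in vK.
have tauv : tau != v by apply/eqP => e; rewrite -e tauK in vK.
have aV : a \in V by case/and3P: av.
have Hc : reach (V :\ v) (Ec E a v) sg tau /\ ~~ reach V E sg tau.
  move: Hd2; rewrite -/(Ec E a v _ _).
  case: (boolP (reach V E sg tau)) => [H|H]; last first.
    by case: (reach _ _ _ _).
  by rewrite (contr_fwd aV nav sgv tauv H).
case: Hc => Hc1 Hc2.
case: (contr_bwd av Hc1) => [H|[H1 H2]]; first by rewrite H in Hc2.
exists ((s1, t1), sg); apply/existsP; exists a; apply/existsP; exists tau.
by rewrite /Qp /= av Pst1 sgK Pst2 Hc2 H1 H2 Hr1 nHr1.
Qed.

Lemma injQ v w x : Qb v x -> Qb w x -> v = w.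
Proof.
move=> /existsP[a /existsP[tv Hv]] /existsP[b /existsP[tw Hw]].
move: Hv Hw; rewrite /Qp.
move=> /andP[av /andP[_ /andP[_ /andP[_ /andP[ntv /andP[sgv /andP[atv /andP[Hr ndv]]]]]]]].
move=> /andP[bw /andP[_ /andP[_ /andP[_ /andP[ntw /andP[sgw /andP[btw /andP[_ ndw]]]]]]]].
case: (eqVneq v w) => // vw; exfalso.
have Hwt : reach V E w x.1.2 by apply: reach_del; exact: (cut2 (adj_del b w) Hr ndw).
have Hsb : reach V E x.1.1 b by apply: reach_del; exact: (cut1 (adj_del b w) Hr ndw).
case: (boolP (reach V (Edel a v) w x.1.2)) => h1.
  case: (boolP (reach V (Edel a v) x.1.1 b)) => h2.
    have bw' : adj V (Edel a v) b w.
      rewrite adj_del bw /=; apply/eqP; case=> _ ewv; by rewrite ewv eqxx in vw.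
    by move: ndv; rewrite /reach (connect_trans h2 (connect_trans (connect1 bw') h1)).
  have Hvb : reach V E v b by apply: reach_del; exact: (cut2 (adj_del a v) Hsb h2).
  move: ntw; rewrite /reach (connect_trans sgv (connect_trans Hvb btw)).
  by [].
have Hwa : reach V E w a by apply: reach_del; exact: (cut1 (adj_del a v) Hwt h1).
by move: ntv; rewrite /reach (connect_trans sgw (connect_trans Hwa atv)).
Qed.

Lemma minimal_bound : #|V :\: K| <= #|K| * #|P|.
Proof.
pose f v := odflt ((v, v), v) [pick x | Qb v x].
have fQ v : v \in V :\: K -> Qb v (f v).
  rewrite in_setD => /andP[vK vV].
  have [x Hx] := exQ vV vK.
  rewrite /f; case: pickP => [y Hy //|H]; by rewrite H in Hx.
have finj : {in V :\: K &, injective f}.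
  move=> v w Hv Hw Hf; apply: (injQ (fQ v Hv)); rewrite Hf; exact: fQ.
have sub : f @: (V :\: K) \subset setX P K.
  apply/subsetP => y /imsetP[v Hv ->].
  move: (fQ v Hv) => /existsP[a /existsP[t]].
  rewrite /Qp => /andP[_ /andP[H1 /andP[H2 _]]].
  by move: H1 H2; case: (f v) => [[s t'] sg] /= H1 H2; rewrite in_setX /= H1 H2.
rewrite -(card_in_imset finj) mulnC -cardsX.
exact: subset_leq_card.
Qed.

End Minimal.

Section Main.
Variable T : finType.

Definition eset (V : {set T}) (E : rel T) := [set p : T * T | adj V E p.1 p.2].
Definition mu (V : {set T}) (E : rel T) := #|V| * (#|{: T * T}|).+1 + #|eset V E|.

Lemma step_mu (K V V1 : {set T}) (E E1 : rel T) : minor_step K V E V1 E1 -> mu V1 E1 < mu V E.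
Proof.
have bnd V' E' : #|eset V' E'| <= #|{: T * T}| by exact: max_card.
case=> {V E V1 E1}.
- move=> V E v vV _; rewrite /mu (cardsD1 v V) vV.
  have := bnd (V :\ v) E; have := bnd V E; nia.
- move=> V E x y Hxy; rewrite /mu ltn_add2l; apply: proper_card.
  apply/properP; split.
    apply/subsetP => p; rewrite !inE /adj => /and3P[-> -> /andP[-> _]] //.
  exists (x, y); first by rewrite inE.
  by rewrite inE /adj /= eqxx !andbF.
- move=> V E w z Hwz _ _.
  have zV : z \in V by case/orP: Hwz => /and3P[].
  rewrite /mu (cardsD1 z V) zV.
  have := bnd (V :\ z) (fun a b => (a != b) && [|| E a b, (a == w) && E z b | (b == w) && E a z]).
  have := bnd V E; nia.
Qed.

Lemma step_K (K V V1 : {set T}) (E E1 : rel T) : minor_step K V E V1 E1 -> K \subset V -> K \subset V1.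
Proof.
case=> {V E V1 E1} //.
- move=> V E v _ vK KV; apply/subsetP => u uK; rewrite in_setD1 (subsetP KV) // andbT.
  by apply/eqP => e; rewrite -e uK in vK.
- move=> V E w z _ _ zK KV; apply/subsetP => u uK; rewrite in_setD1 (subsetP KV) // andbT.
  by apply/eqP => e; rewrite -e uK in zK.
Qed.

Lemma main_ind (K : {set T}) (P : {set T * T}) : P \subset setX K K -> forall n V E, mu V E < n -> K \subset V ->
  exists VH EH, rp_minor K P V E VH EH /\ #|VH :\: K| <= #|K| * #|P|.
Proof.
move=> PK; elim=> [//|n IH] V E Hmu KV.
case: (classic (exists V1 E1, minor_step K V E V1 E1 /\
          forall s t, (s, t) \in P -> reach V1 E1 s t = reach V E s t)).
  move=> [V1 [E1 [Hs Hr]]].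
  have Hmu1 : mu V1 E1 < n by have := step_mu Hs; lia.
  have [VH [EH [[Hm HK HrH] Hb]]] := IH V1 E1 Hmu1 (step_K Hs KV).
  exists VH, EH; split => //; split => //.
    exact: minor_trans Hs Hm.
  by move=> s t Pst; rewrite HrH // Hr.
move=> Hno.
have Hmin : forall V1 E1, minor_step K V E V1 E1 ->
    exists s t, (s, t) \in P /\ reach V1 E1 s t != reach V E s t.
  move=> V1 E1 Hs.
  case: (boolP [forall x in P, reach V1 E1 x.1 x.2 == reach V E x.1 x.2]).
    move/forallP => H; exfalso; apply: Hno; exists V1, E1; split => //.
    move=> s t Pst; apply/eqP; by have := H (s, t); rewrite Pst.
  move/forallPn => [[s t]]; rewrite negb_imply => /andP[Pst Hd].
  by exists s, t.
exists V, E; split; last exact: (minimal_bound KV PK Hmin).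
split => //; exact: minor_refl.
Qed.

End Main.

Theorem mainTheorem7 :
  exists c : nat,
  forall (T : finType) (V : {set T}) (E : rel T) (K : {set T})
         (P : {set T * T}),
    K \subset V -> P \subset setX K K ->
    exists (VH : {set T}) (EH : rel T),
      rp_minor K P V E VH EH /\
      #|VH :\: K| <= c * (#|K| * #|P|).
Proof.
exists 1 => T V E K P KV PK.
have [VH [EH [H1 H2]]] := main_ind PK (ltnSn (mu V E)) KV.
by exists VH, EH; rewrite mul1n.
Qed.
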